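(* Let $p > 0$, let $X$ be a random variable on a probability space with $X \ge 0$ almost surely and $X \in L^p$ (i.e. $E X^p < \infty$), and let $0 < r < s \le p/2$. Then $$\operatorname{Var}(X^r)^{1/r} \le \operatorname{Var}(X^s)^{1/s}.$$
   Context: $\operatorname{Var}(Y) = E(Y^2) - (EY)^2$ denotes the variance of a square-integrable random variable $Y$. Statements such as $X\ge 0$ are meant almost surely. *)

(* Defs.v *)
From mathcomp Require Import all_boot all_order all_algebra.
From mathcomp Require Export all_classical all_reals all_analysis.

(* Main.v *)
Require Import Defs.
From mathcomp Require Import all_boot all_order all_algebra.
From mathcomp Require Import all_classical all_reals all_analysis.
From mathcomp Require Import measurable_realfun.
Import Order.TTheory GRing.Theory Num.Theory.
Local Open Scope ring_scope.
Section aux.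
Context {R : realType}.

Lemma powR_neg (x u : R) : x < 0 -> x `^ u = 1.
Proof.
move=> x0; rewrite /powR lt_eqF// ln0 ?ltW// mulr0 expR0.
by [].
Qed.

Lemma le_powR01 (x t : R) : 0 <= x <= 1 -> 0 < t <= 1 -> x <= x `^ t.
Proof.
move=> /andP[x0 x1] /andP[t0 t1].
have [->|xpos] := eqVneq x 0; first by rewrite powR0 ?gt_eqF.
have xp : 0 < x by rewrite lt_neqAle eq_sym xpos.
rewrite -[X in X <= _]powRr1 //; apply: ger_powR => //; by rewrite xp.
Qed.

Lemma powR_subadd (a b t : R) : 0 <= a -> 0 <= b -> 0 < t <= 1 ->
  (a + b) `^ t <= a `^ t + b `^ t.
Proof.
move=> a0 b0 /andP[t0 t1].
have [c0|cpos] := eqVneq (a + b) 0.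
  by rewrite c0 powR0 ?gt_eqF// addr_ge0// powR_ge0.
have cp : 0 < a + b by rewrite lt_neqAle eq_sym cpos addr_ge0.
set c := a + b.
have ha : a `^ t = c `^ t * (a / c) `^ t.
  rewrite -powRM ?(ltW cp)// ?divr_ge0 ?(ltW cp)//.
  by rewrite mulrCA divff ?gt_eqF// mulr1.
have hb : b `^ t = c `^ t * (b / c) `^ t.
  rewrite -powRM ?(ltW cp)// ?divr_ge0 ?(ltW cp)//.
  by rewrite mulrCA divff ?gt_eqF// mulr1.
rewrite ha hb -mulrDr -[X in X <= _]mulr1; apply: ler_wpM2l; first exact: powR_ge0.
have -> : (1 : R) = a / c + b / c by rewrite -mulrDl divff// gt_eqF.
have h01 : forall z, 0 <= z <= c -> 0 <= z / c <= 1.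
  move=> z /andP[z0 zc]; rewrite divr_ge0 ?(ltW cp)//=.
  by rewrite ler_pdivrMr// mul1r.
have ht : 0 < t <= 1 by rewrite t0 t1.
apply: lerD; apply: le_powR01 => //; apply: h01.
  by rewrite a0 /c lerDl.
by rewrite b0 /c lerDr.
Qed.

Lemma absdiff_powR (x a t : R) : 0 <= x -> 0 <= a -> 0 < t <= 1 ->
  `|x `^ t - a `^ t| <= `|x - a| `^ t.
Proof.
move=> x0 a0 ht.
wlog ax : x a x0 a0 / a <= x.
  move=> H; have [|xa] := leP a x; first exact: H.
  by rewrite distrC (distrC x); apply: H => //; exact: ltW.
have tpos : 0 <= t by case/andP: ht => /ltW.
rewrite ger0_norm ?subr_ge0 ?ge0_ler_powR//.
rewrite ger0_norm ?subr_ge0// lerBlDl.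
have := @powR_subadd (x - a) a t _ a0 ht.
by rewrite subrK ?subr_ge0// addrC => ->.
Qed.

Lemma sqdiff_powR (x a t : R) : 0 <= x -> 0 <= a -> 0 < t <= 1 ->
  (x `^ t - a `^ t) ^+ 2 <= ((x - a) ^+ 2) `^ t.
Proof.
move=> x0 a0 ht.
have tpos : 0 <= t by case/andP: ht => /ltW.
rewrite -[(x - a) ^+ 2]real_normK ?num_real//.
rewrite -[`|x - a| ^+ 2]powR_mulrn// -powRrM mulrC powRrM.
rewrite powR_mulrn ?powR_ge0// -[(x `^ t - a `^ t) ^+ 2]real_normK ?num_real//.
rewrite lerXn2r ?nnegrE ?powR_ge0//.
exact: absdiff_powR.
Qed.

Lemma pow_bound (x u v : R) : 0 <= u <= v -> x `^ u <= 1 + `|x| `^ v.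
Proof.
move=> /andP[u0 uv].
have [xn|xp] := ltP x 0.
  by rewrite powR_neg// lerDl powR_ge0.
have [x1|x1] := leP x 1.
  have h1 : x `^ u <= 1.
    have -> : (1:R) = 1 `^ u by rewrite powR1.
    by rewrite ge0_ler_powR ?nnegrE.
  by apply: le_trans h1 _; rewrite lerDl powR_ge0.
have h1 : x `^ u <= `|x| `^ v by rewrite ger0_norm// ler_powR// ltW.
by apply: le_trans h1 _; rewrite lerDr.
Qed.

End aux.
Section meas.
Context d (T : measurableType d) (R : realType) (P : probability T R).
Local Open Scope ereal_scope.

Lemma Lfun_int (X : T -> R) (p : R) : (0 < p)%R -> X \in Lfun P p%:E ->
  measurable_fun setT X /\ \int[P]_x (`|X x| `^ p)%:E < +oo.
Proof.
move=> p0; rewrite inE => /andP[]; rewrite !inE/= /finite_norm unlock /Lnorm => mX.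
move/lty_poweRy; rewrite invr_neq0 ?gt_eqF// => /(_ isT) h; split => //.
Qed.

Lemma L2_bound (X : T -> R) (p : R) (f : T -> R) : (0 < p)%R -> X \in Lfun P p%:E ->
  measurable_fun setT f -> (forall x, f x ^+ 2 <= 1 + `|X x| `^ p)%R ->
  f \in Lfun P 2%:E.
Proof.
move=> p0 /(Lfun_int _ _ p0) [mX iX] mf fb.
rewrite inE; apply/andP; split; rewrite inE//=.
rewrite /finite_norm unlock /Lnorm poweR_lty//.
under eq_integral => x _ do rewrite (_ : `|(EFin \o f) x| `^ 2 = (`|f x| `^ 2)%:E)//.
have mXp : measurable_fun setT (fun x => `|X x| `^ p)%R.
  by apply: (measurableT_comp (measurable_powR _)); exact: measurableT_comp.
apply: (@le_lt_trans _ _ (\int[P]_x ((1 + `|X x| `^ p)%R)%:E)).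
  apply: ge0_le_integral => //.
  - apply: measurableT_comp => //.
    by apply: (measurableT_comp (measurable_powR _)); exact: measurableT_comp.
  - by apply: measurableT_comp => //; apply: measurable_funD.
  - move=> x _; rewrite lee_fin powR_mulrn// real_normK ?num_real//.
under eq_integral => x _ do rewrite EFinD.
rewrite ge0_integralD//.
rewrite integral_cst// mul1e lte_add_pinfty// ltey_eq fin_num_measure//.
exact: measurableT_comp.
Qed.


Lemma jensen_powR (W : T -> R) (t : R) : measurable_fun setT W ->
  (forall x, 0 <= W x)%R -> (0 < t < 1)%R ->
  'E_P[fun x => (W x `^ t)%R] <= 'E_P[W] `^ t.
Proof.
move=> mW W0 /andP[t0 t1].
have mWt : measurable_fun setT (fun x => W x `^ t)%R.
  exact: (measurableT_comp (measurable_powR _)).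
have := @hoelder _ _ _ P (fun x => W x `^ t)%R (cst 1)%R t^-1 (1 - t)^-1 mWt
  (measurable_cst _) _ _ _.
rewrite invr_gt0 t0 invr_gt0 subr_gt0 t1 !invrK subrKC => /(_ isT isT erefl).
have e1 : \int[P]_x `|(EFin \o ((fun x0 : T => W x0 `^ t) \* cst 1)%R) x| =
    'E_P[(fun x : T => (W x `^ t)%R)].
  rewrite expectation.unlock; apply: eq_integral => x _.
  by rewrite /= mulr1 ?abse_EFin ger0_norm// powR_ge0.
have e2 : 'N[P]_(t^-1)%:E[EFin \o (fun x : T => (W x `^ t)%R)] = 'E_P[W] `^ t.
  rewrite Lnorm.unlock /Lnorm invrK expectation.unlock; congr (_ `^ _).
  apply: eq_integral => x _.
  rewrite /= ?abse_EFin ?poweR_EFin ger0_norm ?powR_ge0// -powRrM mulfV ?gt_eqF//.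
  by rewrite powRr1.
have e3 : 'N[P]_((1 - t)^-1)%:E[EFin \o cst 1%R] = 1.
  rewrite Lnorm.unlock /Lnorm.
  under eq_integral => x _ do rewrite /= ?abse_EFin ?poweR_EFin normr1 powR1.
  rewrite integral_cst//= mul1e.
  have -> : P [set: T]%classic = 1 by exact: probability_setT.
  by rewrite poweR1r.
by rewrite Lnorm1 e1 e2 e3 mule1.
Qed.


Lemma var_le (Z : T -> R) (b : R) : Z \in Lfun P 2%:E ->
  'V_P[Z] <= 'E_P[(fun x => (Z x - b) ^+ 2)%R].
Proof.
move=> Z2.
rewrite -(varianceB_cst_r b Z2) varianceE; last first.
  rewrite rpredB//; first by rewrite lee1n.
  by move=> ?; exact: Lfun_cst.
apply: (le_trans (geeDl _ _)); first by rewrite oppe_le0 sqre_ge0.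
rewrite le_eqVlt; apply/orP; left; apply/eqP; congr expectation; apply/funext => x /=.
Qed.
End meas.
Arguments Lfun_int {d T R P X p}.
Arguments L2_bound {d T R P X p f}.
Arguments var_le {d T R P Z}.
Arguments jensen_powR {d T R P W t}.

Theorem corollary2p3 (d : measure_display) (T : measurableType d) (R : realType)
  (P : probability T R) (X : T -> R) (p r s : R) :
  0 < p ->
  {ae P, forall w, 0 <= X w} ->
  X \in Lfun P p%:E ->
  0 < r -> r < s -> s <= p / 2 ->
  (('V_P[fun w => (X w `^ r)%R]) `^ r^-1 <= ('V_P[fun w => (X w `^ s)%R]) `^ s^-1)%E.
Proof.
move=> p0 _ HX r0 rs sp.
have s0 : 0 < s by apply: lt_trans rs.
have [mX _] := Lfun_int p0 HX.
set Y := fun w => (X w `^ s)%R.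
set Z := fun w => (X w `^ r)%R.
set t := r / s.
have t0 : 0 < t by rewrite divr_gt0.
have t1 : t < 1 by rewrite ltr_pdivrMr// mul1r.
have hZ : Z = fun w => Y w `^ t.
  by apply/funext => w; rewrite /Z /Y /t -powRrM mulrCA divff ?gt_eqF// mulr1.
have mY : measurable_fun setT Y by exact: (measurableT_comp (measurable_powR _)).
have mZ : measurable_fun setT Z by exact: (measurableT_comp (measurable_powR _)).
have bnd : forall u, 0 < u -> u <= s -> forall w, (X w `^ u) ^+ 2 <= 1 + `|X w| `^ p.
  move=> u u0 us w; rewrite -powR_mulrn ?powR_ge0// -powRrM.
  apply: pow_bound; rewrite mulr_ge0 ?(ltW u0)//=.
  by rewrite -ler_pdivlMr// (le_trans us sp).
have Y2 : Y \in Lfun P 2%:E by apply: (L2_bound p0 HX mY); exact: bnd.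
have Z2 : Z \in Lfun P 2%:E.
  by apply: (L2_bound p0 HX mZ); apply: bnd => //; exact: ltW.
set a := fine 'E_P[Y].
have a0 : 0 <= a by apply: fine_ge0; apply: expectation_ge0 => x; exact: powR_ge0.
have Y0 : forall x, 0 <= Y x by move=> x; exact: powR_ge0.
have key : ('V_P[Z] <= 'V_P[Y] `^ t)%E.
  apply: (le_trans (var_le (a `^ t) Z2)).
  apply: (@le_trans _ _ ('E_P[fun x => (((Y x - a) ^+ 2) `^ t)%R])%E).
    apply: expectation_le.
    - by apply: measurable_funX; apply: measurable_funB.
    - apply: (measurableT_comp (measurable_powR _)).
      by apply: measurable_funX; apply: measurable_funB.
    - by move=> x; exact: sqr_ge0.
    - by move=> x; exact: powR_ge0.
    - apply: aeW => x; rewrite hZ /=; apply: sqdiff_powR => //.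
      by rewrite t0 ltW.
  have -> : ('V_P[Y] = 'E_P[fun x => ((Y x - a) ^+ 2)%R])%E.
    rewrite /variance covariance.unlock; congr expectation; apply/funext => x.
  apply: jensen_powR => //; last by rewrite t0 t1.
    by apply: measurable_funX; apply: measurable_funB.
  by move=> x; exact: sqr_ge0.
have -> : s^-1 = t * r^-1 by rewrite /t mulrAC divff ?gt_eqF// mul1r.
rewrite poweRrM gt0_ler_poweR ?invr_ge0 ?(ltW r0)//.
- by rewrite in_itv/= variance_ge0 leey.
- by rewrite in_itv/= poweR_ge0 leey.
Qed.
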